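(* Let $\Phi$ be a (Bourbaki) root system, $D$ a set of simple roots, $\Phi^+$ the positive roots with respect to $D$, $J\subseteq D$, and $\pi_J\colon\mathbb Z\Phi\to\mathbb Z\Phi/\mathbb Z(D\setminus J)$ the natural projection. Let $\alpha\in\pi_J(\Phi^+)\setminus\{0\}$ be such that $\alpha\neq m\alpha_0$ for every integer $m\ge1$ and every $\alpha_0\in\pi_J(D)\setminus\{0\}$. Then there exist non-collinear $\beta\in\pi_J(\Phi^+)\setminus\{0\}$ and $\gamma\in\pi_J(J)$ with $\alpha=\beta+\gamma$. *)

(* Defs.v *)
From HB Require Import structures.
From mathcomp Require Import all_boot all_order all_algebra.
Set Implicit Arguments. Unset Strict Implicit. Unset Printing Implicit Defensive.
Import Order.TTheory GRing.Theory Num.Theory.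
Local Open Scope ring_scope.

(* Root systems in the concrete vector space V = 'rV[R]_n over a real field R.
   A finite subset of V is represented by a seq (membership via \in). *)
Section RootSystems.
Variables (R : realFieldType) (n : nat).
Local Notation V := 'rV[R]_n.

Definition pairing (x : V) (c : 'cV[R]_n) : R := (x *m c) 0 0.

(* Bourbaki's definition of a (crystallographic, not necessarily reduced)
   root system in V:
   (RS I)  finite, does not contain 0, spans V;
   (RS II) for each a there is a coroot a^v in V* with <a,a^v> = 2 and the
           reflection x |-> x - <x,a^v> a leaves Phi stable;
   (RS III) <b,a^v> is an integer for all b in Phi. *)
Definition is_root_system (Phi : seq V) : Prop :=
  [/\ 0 \notin Phi, (<<Phi>>)%VS = fullv &
   forall a, a \in Phi -> exists c : 'cV[R]_n,
     [/\ pairing a c = 2,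
         forall b, b \in Phi -> b - pairing b c *: a \in Phi &
         forall b, b \in Phi -> exists k : int, pairing b c = k%:~R]].

Definition in_Zspan (S : seq V) (x : V) : Prop :=
  exists k : V -> int, x = \sum_(s <- S) s *~ k s.

Definition in_Nspan (S : seq V) (x : V) : Prop :=
  exists k : V -> nat, x = \sum_(s <- S) s *+ k s.

Definition is_base (Phi D : seq V) : Prop :=
  [/\ {subset D <= Phi}, uniq D, free D, (<<D>>)%VS = fullv &
   forall b, b \in Phi -> in_Nspan D b \/ in_Nspan D (- b)].

Definition positive_root (Phi D : seq V) (b : V) : Prop :=
  b \in Phi /\ in_Nspan D b.

Definition DminusJ (D J : seq V) : seq V := [seq d <- D | d \notin J].

(* pi_J x = pi_J y in ZPhi / Z(D \ J) *)
Definition congJ (D J : seq V) (x y : V) : Prop :=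
  in_Zspan (DminusJ D J) (x - y).

(* pi_J x and pi_J y are collinear in the (torsion-free) group
   ZPhi / Z(D \ J): a nontrivial integer relation between them. *)
Definition collinearJ (D J : seq V) (x y : V) : Prop :=
  exists p q : int, ((p != 0) || (q != 0)) /\ congJ D J (x *~ p + y *~ q) 0.

End RootSystems.

(* Main.v *)
From Stdlib Require Import ClassicalEpsilon.
Require Import Defs.
From HB Require Import structures.
From mathcomp Require Import all_boot all_order all_algebra.
From mathcomp Require Import zify ring lra.
Import Order.TTheory GRing.Theory Num.Theory.
Local Open Scope ring_scope.

Section Coef.
Variables (R : realFieldType) (n : nat) (D : seq 'rV[R]_n).
Local Notation V := 'rV[R]_n.
Hypothesis freeD : free D.

Lemma coef_uniq (z : V -> int) :
  \sum_(s <- D) s *~ z s = 0 -> forall s, s \in D -> z s = 0.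
Proof.
move=> H s sD.
have /(@vector.freeP _ _ _ (in_tuple D)) F := freeD.
pose k (i : 'I_(size D)) : R := (z (D`_i))%:~R.
have Hk : \sum_(i < size D) k i *: (in_tuple D)`_i = 0.
  rewrite -[RHS]H [RHS](big_nth 0) big_mkord; apply: eq_bigr => i _.
  by rewrite /k scaler_int.
have si : (index s D < size D)%N by rewrite index_mem.
have := F k Hk (Ordinal si).
rewrite /k /= nth_index //. by move/eqP; rewrite intr_eq0 => /eqP.
Qed.
End Coef.

Section Comb.
Variables (R : realFieldType) (n : nat) (D J : seq 'rV[R]_n).
Local Notation V := 'rV[R]_n.
Hypothesis freeD : free D.
Hypothesis uniqD : uniq D.
Hypothesis JD : {subset J <= D}.

Definition zsum (z : V -> int) : V := \sum_(s <- D) s *~ z s.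

Lemma zsumD z1 z2 : zsum z1 + zsum z2 = zsum (fun s => z1 s + z2 s).
Proof. by rewrite /zsum -big_split; apply: eq_bigr => s _; rewrite mulrzDr. Qed.

Lemma zsumN z : - zsum z = zsum (fun s => - z s).
Proof. by rewrite /zsum -sumrN; apply: eq_bigr => s _; rewrite mulrNz. Qed.

Lemma zsumZ z p : zsum z *~ p = zsum (fun s => z s * p).
Proof.
rewrite /zsum (big_morph (fun x : V => x *~ p) (mulrzDl p) (mul0rz _ p)).
by apply: eq_bigr => s _; rewrite mulrzA.
Qed.

Lemma zsumB z1 z2 : zsum z1 - zsum z2 = zsum (fun s => z1 s - z2 s).
Proof. by rewrite zsumN zsumD. Qed.

Lemma nsum_zsum (k : V -> nat) : \sum_(s <- D) s *+ k s = zsum (fun s => (k s)%:Z).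
Proof. by apply: eq_bigr => s _; rewrite -pmulrn. Qed.

Lemma zsum_single d : d \in D -> d = zsum (fun s => (s == d)%:Z).
Proof.
move=> dD; rewrite /zsum (bigD1_seq d) //= eqxx big1 ?addr0 //.
by move=> s /negbTE ->.
Qed.

Lemma zsum_eq z1 z2 : zsum z1 = zsum z2 -> forall s, s \in D -> z1 s = z2 s.
Proof.
move=> /eqP; rewrite -subr_eq0 zsumB => /eqP H s sD.
by apply/eqP; rewrite -subr_eq0; apply/eqP; exact: (@coef_uniq _ _ _ freeD _ H s sD).
Qed.

Lemma congJ_char z1 z2 :
  congJ D J (zsum z1) (zsum z2) <-> forall s, s \in J -> z1 s = z2 s.
Proof.
rewrite /congJ /in_Zspan zsumB; split.
  move=> [h Hh] s sJ.
  have E : \sum_(s0 <- DminusJ D J) s0 *~ h s0 =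
           zsum (fun s0 => if s0 \notin J then h s0 else 0).
    rewrite /DminusJ big_filter big_mkcond /zsum; apply: eq_bigr => t _.
    by case: ifP.
  rewrite E in Hh; have := zsum_eq _ _ Hh _ (JD _ sJ) => /=.
  by rewrite sJ /= => /eqP; rewrite subr_eq0 => /eqP.
move=> H; exists (fun s => z1 s - z2 s).
rewrite /DminusJ big_filter /zsum [RHS]big_mkcond; apply: eq_bigr => t _.
by case: ifP => //= /negbFE tJ; rewrite H // subrr mulr0z.
Qed.

Lemma noncollinear z g : g \in J -> (exists2 s, s \in J & (s != g) && (z s != 0)) ->
  ~ collinearJ D J (zsum z) g.
Proof.
move=> gJ [s0 s0J /andP [s0g zs0]] [p [q [pq H]]].
have Eg := zsum_single _ (JD _ gJ).
have E0 : (0 : V) = zsum (fun _ => 0).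
  by rewrite /zsum big1 // => s _; rewrite mulr0z.
rewrite Eg zsumZ zsumZ zsumD E0 in H.
move/congJ_char: H => H.
have H0 := H _ s0J; rewrite (negbTE s0g) mul0r addr0 in H0.
have p0 : p = 0.
  by move/eqP: H0; rewrite mulf_eq0 (negbTE zs0) /= => /eqP.
have Hg := H _ gJ; rewrite eqxx p0 mulr0 mul1r add0r in Hg.
by move: pq; rewrite p0 Hg eqxx.
Qed.
End Comb.

Section Roots.
Variables (R : realFieldType) (n : nat) (Phi : seq 'rV[R]_n).
Local Notation V := 'rV[R]_n.
Hypothesis rs : is_root_system Phi.

Lemma pairingD (x y : V) c : pairing (x + y) c = pairing x c + pairing y c.
Proof. by rewrite /pairing mulmxDl mxE. Qed.
Lemma pairingZ t (x : V) c : pairing (t *: x) c = t * pairing x c.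
Proof. by rewrite /pairing -scalemxAl mxE. Qed.
Lemma pairingN (x : V) c : pairing (- x) c = - pairing x c.
Proof. by rewrite -scaleN1r pairingZ mulN1r. Qed.
Lemma pairingB (x y : V) c : pairing (x - y) c = pairing x c - pairing y c.
Proof. by rewrite pairingD pairingN. Qed.
Lemma pairing0 (c : 'cV[R]_n) : pairing (0 : V) c = 0.
Proof. by rewrite /pairing mul0mx mxE. Qed.

Definition Lin (u v : V) (al be : R) : V := al *: u + be *: v.
Lemma LinD u v a b c d : Lin u v a b + Lin u v c d = Lin u v (a + c) (b + d).
Proof. by rewrite /Lin !scalerDl addrACA. Qed.
Lemma LinZ u v t a b : t *: Lin u v a b = Lin u v (t * a) (t * b).
Proof. by rewrite /Lin scalerDr !scalerA. Qed.
Lemma LinB u v a b c d : Lin u v a b - Lin u v c d = Lin u v (a - c) (b - d).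
Proof. by rewrite -scaleN1r LinZ LinD !mulN1r. Qed.
Lemma Lin_pairing u v a b c :
  pairing (Lin u v a b) c = a * pairing u c + b * pairing v c.
Proof. by rewrite /Lin pairingD !pairingZ. Qed.
Lemma Lin10 u v : u = Lin u v 1 0. Proof. by rewrite /Lin scale1r scale0r addr0. Qed.
Lemma ZL2 u v t : t *: v = Lin u v 0 t. Proof. by rewrite /Lin scale0r add0r. Qed.
Lemma ZL1 u v t : t *: u = Lin u v t 0. Proof. by rewrite /Lin scale0r addr0. Qed.

Definition reflc (c : 'cV[R]_n) (b y : V) := y - pairing y c *: b.

Lemma reflc_L2 c u v a b :
  reflc c v (Lin u v a b) = Lin u v a (b - (a * pairing u c + b * pairing v c)).
Proof. by rewrite /reflc Lin_pairing (ZL2 u) LinB subr0. Qed.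
Lemma reflc_L1 c u v a b :
  reflc c u (Lin u v a b) = Lin u v (a - (a * pairing u c + b * pairing v c)) b.
Proof. by rewrite /reflc Lin_pairing (ZL1 u v) LinB subr0. Qed.

Lemma pigeon (y v : V) :
  (forall j, (j <= size Phi)%N -> y + j%:R *: v \in Phi) -> v = 0.
Proof.
move=> H; apply/eqP; apply/negP => /negP v0.
pose s := [seq y + j%:R *: v | j <- iota 0 (size Phi).+1].
have us : uniq s.
  rewrite map_inj_in_uniq ?iota_uniq // => i j _ _ /addrI /eqP.
  rewrite -subr_eq0 -scalerBl scaler_eq0 (negbTE v0) orbF subr_eq0 eqr_nat.
  by move/eqP.
have sub : {subset s <= Phi}.
  move=> z /mapP [j]; rewrite mem_iota add0n => /andP [_ jlt] ->.
  by apply: H.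
by have := uniq_leq_size us sub; rewrite size_map size_iota ltnn.
Qed.

Definition corP (a : V) (c : 'cV[R]_n) : Prop :=
  [/\ pairing a c = 2, forall b, b \in Phi -> b - pairing b c *: a \in Phi &
      forall b, b \in Phi -> exists k : int, pairing b c = k%:~R].
Definition cor (a : V) : 'cV[R]_n := epsilon (inhabits 0) (corP a).
Lemma cor_spec a : a \in Phi -> corP a (cor a).
Proof. case: rs => _ _ H aP; apply: epsilon_spec; exact: H. Qed.
Definition refl a y := reflc (cor a) a y.
Lemma refl_in a y : a \in Phi -> y \in Phi -> refl a y \in Phi.
Proof. by move=> aP yP; case: (cor_spec _ aP) => _ H _; apply: H. Qed.
Lemma cor2 a : a \in Phi -> pairing a (cor a) = 2.
Proof. by move=> aP; case: (cor_spec _ aP). Qed.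
Lemma cor_int a b : a \in Phi -> b \in Phi -> exists k : int, pairing b (cor a) = k%:~R.
Proof. by move=> aP; case: (cor_spec _ aP) => _ _ H; apply: H. Qed.
Lemma Phi_neq0 a : a \in Phi -> a != 0.
Proof. by case: rs => H _ _ aP; apply: contraNneq H => <-. Qed.
Lemma reflaa a : a \in Phi -> refl a a = - a.
Proof.
move=> aP; rewrite /refl /reflc cor2 // -{1}(scale1r a) -scalerBl.
by rewrite (_ : (1 - 2 : R) = -1) ?scaleN1r //; ring.
Qed.
Lemma neg_in a : a \in Phi -> - a \in Phi.
Proof. by move=> aP; rewrite -reflaa // refl_in. Qed.

Definition Smx (b : V) : 'M[R]_n := 1%:M - cor b *m b.
Lemma reflS b w : refl b w = w *m Smx b.
Proof.
rewrite /refl /reflc /Smx mulmxBr mulmx1 mulmxA [w *m cor b]mx11_scalar.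
by rewrite mul_scalar_mx.
Qed.
Lemma refl_lin b u t v : refl b (u - t *: v) = refl b u - t *: refl b v.
Proof. by rewrite !reflS mulmxBl scalemxAl. Qed.
Lemma refl_invol b : b \in Phi -> cancel (refl b) (refl b).
Proof.
move=> bP y; rewrite [in X in refl b X]/refl /reflc refl_lin.
by rewrite reflaa // scalerN opprK subrK.
Qed.

Lemma cor_uniq a c1 c2 : a \in Phi -> pairing a c1 = 2 -> pairing a c2 = 2 ->
  (forall b, b \in Phi -> b - pairing b c1 *: a \in Phi) ->
  (forall b, b \in Phi -> b - pairing b c2 *: a \in Phi) ->
  forall x, x \in Phi -> pairing x c1 = pairing x c2.
Proof.
move=> aP h1 h2 r1 r2 x xP.
have step t : Lin x a 1 t \in Phi ->
    Lin x a 1 (t + (pairing x c2 - pairing x c1)) \in Phi.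
  move=> zP.
  have : reflc c1 a (reflc c2 a (Lin x a 1 t)) \in Phi by apply: r1; apply: r2.
  rewrite !reflc_L2 h1 h2.
  set p1 := pairing x c1; set p2 := pairing x c2.
  match goal with |- is_true (Lin _ _ _ ?A \in _) -> is_true (Lin _ _ _ ?B \in _) =>
    by rewrite (_ : A = B) //; ring end.
have all_j j : Lin x a 1 (j%:R * (pairing x c2 - pairing x c1)) \in Phi.
  elim: j => [|j IH]; first by rewrite mul0r -Lin10.
  by rewrite mulrSr mulrDl mul1r; apply: step.
have := @pigeon x (Lin x a 0 (pairing x c2 - pairing x c1)).
have -> : Lin x a 0 (pairing x c2 - pairing x c1) =
          (pairing x c2 - pairing x c1) *: a by rewrite (ZL2 x).
move=> H; have /eqP : (pairing x c2 - pairing x c1) *: a = 0.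
  apply: H => j _; rewrite (ZL2 x a) LinZ {1}(Lin10 x a) LinD.
  by rewrite (_ : 1 + j%:R * 0 = 1) ?mulr0 ?addr0 ?add0r // ; ring.
rewrite scaler_eq0 (negbTE (Phi_neq0 _ aP)) orbF subr_eq0 => /eqP.
by move=> ->.
Qed.
Arguments cor_spec {a}.
Arguments refl_in {a y}.
Arguments cor2 {a}.
Arguments cor_int {a b}.
Arguments Phi_neq0 {a}.
Arguments refl_invol {b}.
Arguments reflaa {a}.
Arguments neg_in {a}.

Lemma cor_refl b a y : b \in Phi -> a \in Phi -> y \in Phi ->
  pairing y (cor (refl b a)) = pairing (refl b y) (cor a).
Proof.
move=> bP aP yP.
have HS w : pairing w (Smx b *m cor a) = pairing (refl b w) (cor a).
  by rewrite /pairing reflS mulmxA.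
rewrite -HS; apply: (@cor_uniq (refl b a)) => //.
- exact: refl_in.
- exact: cor2 (refl_in bP aP).
- by rewrite HS refl_invol // cor2.
- by case: (cor_spec (refl_in bP aP)).
- move=> w wP; rewrite HS.
  have -> : w - pairing (refl b w) (cor a) *: refl b a =
            refl b (refl a (refl b w)).
    by rewrite [refl a _]/refl /reflc refl_lin refl_invol.
  by do 3 apply: refl_in => //.
Qed.

Definition B (x y : V) : R :=
  \sum_(a <- undup Phi) pairing x (cor a) * pairing y (cor a).

Lemma B_sym x y : B x y = B y x.
Proof. by apply: eq_bigr => a _; rewrite mulrC. Qed.
Lemma BD x y z : B (x + y) z = B x z + B y z.
Proof. by rewrite /B -big_split; apply: eq_bigr => a _; rewrite pairingD mulrDl. Qed.
Lemma BZ t x z : B (t *: x) z = t * B x z.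
Proof. by rewrite /B mulr_sumr; apply: eq_bigr => a _; rewrite pairingZ mulrA. Qed.
Lemma BN x z : B (- x) z = - B x z.
Proof. by rewrite -scaleN1r BZ mulN1r. Qed.
Lemma BB x y z : B (x - y) z = B x z - B y z.
Proof. by rewrite BD BN. Qed.
Lemma B0 z : B 0 z = 0.
Proof. by rewrite -(scale0r (0 : V)) BZ mul0r. Qed.

Lemma B_sum2 x (r : seq V) (k : V -> nat) :
  B x (\sum_(s <- r) s *+ k s) = \sum_(s <- r) B x s *+ k s.
Proof.
elim: r => [|s r IH]; first by rewrite !big_nil B_sym B0.
rewrite !big_cons B_sym BD; congr (_ + _); last by rewrite B_sym IH.
by rewrite -scaler_nat BZ mulr_natl B_sym.
Qed.

Lemma B_refl b x y : b \in Phi -> x \in Phi -> y \in Phi ->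
  B (refl b x) (refl b y) = B x y.
Proof.
move=> bP xP yP; rewrite /B.
transitivity (\sum_(a <- map (refl b) (undup Phi))
                 pairing x (cor a) * pairing y (cor a)).
  rewrite big_map; apply: eq_big_seq => a; rewrite mem_undup => aP.
  by rewrite !cor_refl.
apply: perm_big; apply: uniq_perm.
- rewrite map_inj_uniq ?undup_uniq //; exact: (can_inj (refl_invol bP)).
- exact: undup_uniq.
- move=> a; rewrite mem_undup; apply/mapP/idP.
  + by case=> a'; rewrite mem_undup => a'P ->; apply: refl_in.
  + move=> aP; exists (refl b a); first by rewrite mem_undup refl_in.
    by rewrite refl_invol.
Qed.

Arguments B_refl {b x y}.

Lemma B_rel x a : x \in Phi -> a \in Phi ->
  2 * B x a = pairing x (cor a) * B a a.
Proof.
move=> xP aP.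
have := B_refl aP xP aP; rewrite reflaa // B_sym BN B_sym /refl /reflc BB BZ.
move=> H; lra.
Qed.

Lemma B_ge0 x : 0 <= B x x.
Proof. by apply: sumr_ge0 => a _; rewrite -expr2 sqr_ge0. Qed.

Lemma B_pos a : a \in Phi -> 0 < B a a.
Proof.
move=> aP; rewrite /B (bigD1_seq a) ?mem_undup ?undup_uniq //= cor2 //.
match goal with |- is_true (0 < _ + ?S) =>
  have : 0 <= S by apply: sumr_ge0 => c _; rewrite -expr2 sqr_ge0 end.
lra.
Qed.
Arguments B_pos {a}.
Arguments B_rel {x a}.

Lemma Lin_congr u v a b a' b' : a = a' -> b = b' -> Lin u v a b = Lin u v a' b'.
Proof. by move=> -> ->. Qed.

Lemma CS (T : Type) (r : seq T) (u v : T -> R) :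
  0 < \sum_(i <- r) v i * v i ->
  (\sum_(i <- r) u i * v i) ^+ 2 <=
    (\sum_(i <- r) u i * u i) * (\sum_(i <- r) v i * v i).
Proof.
set A := \sum_(i <- r) u i * u i; set Bv := \sum_(i <- r) v i * v i.
set C := \sum_(i <- r) u i * v i.
move=> Bp.
have H : 0 <= \sum_(i <- r) (Bv * u i - C * v i) ^+ 2.
  by apply: sumr_ge0 => i _; rewrite sqr_ge0.
have E : \sum_(i <- r) (Bv * u i - C * v i) ^+ 2 = Bv * (Bv * A - C ^+ 2).
  transitivity (\sum_(i <- r) ((Bv * Bv) * (u i * u i) - (2 * Bv * C) * (u i * v i)
                 + (C * C) * (v i * v i))).
    by apply: eq_bigr => i _; ring.
  rewrite big_split sumrB /= -!mulr_sumr -/A -/C -/Bv; ring.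
rewrite E pmulr_rge0 // subr_ge0 in H; by rewrite mulrC.
Qed.

Lemma B_CS x y : 0 < B y y -> B x y ^+ 2 <= B x x * B y y.
Proof. exact: CS. Qed.

Lemma two_two x d : x \in Phi -> d \in Phi ->
  pairing x (cor d) = 2 -> pairing d (cor x) = 2 -> x = d.
Proof.
move=> xP dP h1 h2.
have step t : Lin x d (1 + t) (- t) \in Phi ->
              Lin x d (1 + (t + 2)) (- (t + 2)) \in Phi.
  move=> zP.
  have : refl x (refl d (Lin x d (1 + t) (- t))) \in Phi by do 2 apply: refl_in => //.
  rewrite /refl reflc_L2 reflc_L1 h1 h2 !cor2 //.
  by move=> H; rewrite (_ : Lin _ _ _ _ = Lin x d (1 + t - ((1 + t) * 2 + (- t - ((1 + t) * 2 + - t * 2)) * 2)) (- t - ((1 + t) * 2 + - t * 2))) //; apply: Lin_congr; ring.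
have all_j j : Lin x d (1 + j%:R * 2) (- (j%:R * 2)) \in Phi.
  elim: j => [|j IH]; first by rewrite mul0r addr0 oppr0 -Lin10.
  by rewrite mulrSr mulrDl mul1r; apply: step.
have /eqP : Lin x d 2 (-2) = 0.
  apply: (pigeon x) => j _; rewrite LinZ {1}(Lin10 x d) LinD.
  by rewrite (_ : Lin _ _ _ _ = Lin x d (1 + j%:R * 2) (- (j%:R * 2))) //; apply: Lin_congr; ring.
rewrite /Lin scaleNr -scalerBr scaler_eq0 pnatr_eq0 /= subr_eq0.
by move/eqP.
Qed.

Lemma root_step (D : seq V) x (k : V -> nat) : is_base Phi D -> x \in Phi ->
  x = \sum_(s <- D) s *+ k s ->
  exists2 d, d \in D & (0 < k d)%N && ((x == d) || (x - d \in Phi)).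
Proof.
move=> [DP _ _ _ _] xP Ex.
have Bxx := B_pos xP.
have E : B x x = \sum_(s <- D) B x s *+ k s by rewrite {2}Ex B_sum2.
case: (boolP (has (fun s => (0 < k s)%N && (0 < B x s)) D)) =>
    [/hasP [d dD /andP [kd Bxd]] | /hasPn Hn]; last first.
  have : \sum_(s <- D) B x s *+ k s <= 0.
    rewrite big_seq; apply: sumr_le0 => s sD.
    have := Hn s sD; case: (posnP (k s)) => [->|kpos]; first by rewrite mulr0n.
    by rewrite /= -leNgt => H; apply: mulrn_wle0.
  by rewrite -E => /(lt_le_trans Bxx); rewrite ltxx.
exists d => //; rewrite kd /=.
have dP := DP d dD.
have Bdd := B_pos dP.
have [K HK] := cor_int dP xP.
have [L HL] := cor_int xP dP.
have r1 := B_rel xP dP; have r2 := B_rel dP xP.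
rewrite B_sym in r2.
have cs := B_CS x d Bdd.
rewrite HK in r1; rewrite HL in r2.
have Kp : 0 < K.
  rewrite -(ltr0z R); nra.
have Lp : 0 < L.
  rewrite -(ltr0z R); nra.
have KL : K * L <= 4.
  rewrite -(ler_int R) intrM.
  have e : (K%:~R * L%:~R) * (B x x * B d d) = 4 * (B x d ^+ 2) :> R.
    rewrite (_ : 4 * B x d ^+ 2 = (2 * B x d) * (2 * B x d)); last by ring.
    by rewrite {1}r1 r2; ring.
  have pp : 0 < B x x * B d d by rewrite mulr_gt0.
  rewrite -(ler_pM2r pp) e; lra.
have : (K = 1) \/ (L = 1) \/ (K = 2 /\ L = 2) by lia.
case=> [K1|[L1|[K2 L2]]].
- apply/orP; right.
  have := refl_in dP xP; rewrite /refl /reflc HK K1 scale1r //.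
- apply/orP; right.
  have := neg_in (refl_in xP dP); rewrite /refl /reflc HL L1 scale1r opprB //.
- apply/orP; left; apply/eqP; apply: two_two => //.
  + by rewrite HK K2.
  + by rewrite HL L2.
Qed.
End Roots.

Theorem lemma4p3 (R : realFieldType) (n : nat) (Phi D J : seq 'rV[R]_n)
    (a : 'rV[R]_n) :
  is_root_system Phi -> is_base Phi D -> {subset J <= D} ->
  (* alpha = pi_J a with a a positive root, alpha <> 0 *)
  positive_root Phi D a -> ~ congJ D J a 0 ->
  (* alpha <> m * alpha_0 for all m >= 1, alpha_0 in pi_J(D) \ {0} *)
  (forall (m : nat) (d : 'rV[R]_n), (1 <= m)%N -> d \in D ->
      ~ congJ D J d 0 -> ~ congJ D J a (d *+ m)) ->
  exists b g : 'rV[R]_n,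
    [/\ positive_root Phi D b, ~ congJ D J b 0, g \in J,
        ~ collinearJ D J b g & congJ D J a (b + g)].
Proof.
move=> rs bD JD [aP [ka Ea]] naJ Hm.
have [DP uD fD _ baseD] := bD.
have CC := congJ_char _ _ _ _ fD JD.
have ZS := zsum_single _ _ _ uD.
have ZE := zsum_eq _ _ _ fD.
have NC := noncollinear _ _ _ _ fD uD JD.
have RS := root_step _ _ _ rs D.
pose za := fun s => (ka s)%:Z.
have Ea' : a = zsum _ _ D za by rewrite Ea nsum_zsum.
have Z0 : (0 : 'rV[R]_n) = zsum _ _ D (fun _ => 0).
  by rewrite /zsum big1 // => s _; rewrite mulr0z.
have dJn0 d : d \in J -> ~ congJ D J d 0.
  move=> dJ; rewrite (ZS d (JD _ dJ)) Z0 CC => H.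
  by have := H d dJ; rewrite eqxx.
have key : forall N x (k : 'rV_n -> nat), \sum_(s <- D) k s = N -> x \in Phi ->
   x = \sum_(s <- D) s *+ k s -> congJ D J a x ->
   exists b g : 'rV[R]_n,
    [/\ positive_root Phi D b, ~ congJ D J b 0, g \in J,
        ~ collinearJ D J b g & congJ D J a (b + g)].
  elim=> [|N IH] x k Hs xP Ex ax;
    have [d dD /andP [kd Hd]] := RS x k bD xP Ex.
    have : (k d <= \sum_(s <- D) k s)%N by rewrite (bigD1_seq d) //= leq_addr.
    by rewrite Hs leqNgt kd.
  move: Hd => /orP [/eqP xd | xdP].
    case dJ: (d \in J).
      exfalso; apply: (Hm 1%N d (leqnn 1) dD (dJn0 d dJ)).
      by rewrite mulr1n -xd.
    exfalso; apply: naJ.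
    move: ax; rewrite Ea' xd (ZS d dD) Z0 !CC => ax s sJ; rewrite ax //.
    have -> : (s == d) = false by apply/eqP => sd; move: dJ; rewrite -sd sJ.
    done.
  have [[h Eh] | [h Eh]] := baseD _ xdP; last first.
    have E1 : zsum _ _ D (fun s => (k s)%:Z + (h s)%:Z) =
              zsum _ _ D (fun s => (s == d)%:Z).
      by rewrite -zsumD -!nsum_zsum -Ex -Eh opprB addrC subrK nsum_zsum -ZS.
    have hz s : s \in D -> h s = 0%N.
      move=> sD; have := ZE _ _ E1 s sD.
      case: (eqVneq s d) => [->|sd]; rewrite ?eqxx ?(negbTE sd) /=; lia.
    have : - (x - d) = 0 by rewrite Eh big_seq big1 // => s sD; rewrite hz.
    by move/eqP; rewrite oppr_eq0 (negbTE (Phi_neq0 _ _ _ rs _ xdP)).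
  have E2 : zsum _ _ D (fun s => (k s)%:Z) =
            zsum _ _ D (fun s => (h s)%:Z + (s == d)%:Z).
    by rewrite -nsum_zsum -Ex -zsumD -nsum_zsum -Eh -ZS // subrK.
  have hk s : s \in D -> k s = (h s + (s == d))%N.
    by move=> sD; have := ZE _ _ E2 s sD; lia.
  have Hsum : \sum_(s <- D) h s = N.
    have : \sum_(s <- D) k s = (\sum_(s <- D) h s + 1)%N.
      rewrite (eq_big_seq (fun s => (h s + (s == d))%N)); last by move=> s sD; rewrite hk.
      rewrite big_split /=; congr (_ + _)%N.
      by rewrite (bigD1_seq d) //= eqxx big1 // => s /negbTE ->.
    by rewrite Hs addn1 => -[].
  have axs : forall s, s \in J -> za s = (h s + (s == d))%N.
    move: ax; rewrite Ea' Ex nsum_zsum CC => ax s sJ; rewrite ax // hk //; exact: JD.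
  case dJ: (d \in J); last first.
    apply: (IH (x - d) h Hsum xdP Eh).
    rewrite Ea' Eh nsum_zsum CC => s sJ; rewrite axs //.
    have -> : (s == d) = false by apply/eqP => sd; move: dJ; rewrite -sd sJ.
    by rewrite addn0.
  case: (boolP (has (fun s => (s != d) && (h s != 0%N)) J)) =>
      [/hasP [s0 s0J /andP [s0d hs0]] | /hasPn Hn].
    exists (x - d), d; split => //.
    - by split => //; exists h.
    - rewrite Eh nsum_zsum Z0 CC => H; have := H s0 s0J; move: hs0; lia.
    - rewrite Eh nsum_zsum; apply: NC => //; exists s0 => //; rewrite s0d /=.
      by move: hs0; lia.
    - by rewrite subrK.
  exfalso; apply: (Hm (h d).+1 d isT dD (dJn0 d dJ)).
  have -> : d *+ (h d).+1 = zsum _ _ D (fun s => (s == d)%:Z * ((h d).+1)%:Z).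
    by rewrite -zsumZ -ZS // pmulrn.
  rewrite Ea' CC => s sJ; rewrite axs //.
  case: (eqVneq s d) => [->|sd]; rewrite ?eqxx ?(negbTE sd) /=; first lia.
  have := Hn s sJ; rewrite sd /= negbK => /eqP ->; lia.
apply: (key _ a ka erefl aP Ea).
by exists (fun _ => 0); rewrite subrr big1 // => s _; rewrite mulr0z.
Qed.
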